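(* Let $\mathbf{A} \in \mathbb{R}^{n\times n}$ be invertible and let $\hat{\mathbf{A}}$ be a random $n\times n$ real matrix, invertible almost surely, such that $\mathbb{E}[\hat{\mathbf{A}}^{-2}]$ exists. Assume: (1) (unbiased noise) $\mathbb{E}[\hat{\mathbf{A}}] = \mathbf{A}$; (2) (isotropy) the right-hand side $\mathbf{b}$ is random with auto-correlation $\mathbf{R} = \mathbb{E}[\mathbf{b}\mathbf{b}^T] = \mathbf{I}$; (3) (noise symmetry) $\hat{\mathbf{Z}} = \hat{\mathbf{A}} - \mathbf{A}$ has the same distribution as $-\hat{\mathbf{Z}}$; (4) (residual norm) the error is measured in the norm given by $\mathbf{B} = \mathbf{A}^T\mathbf{A}$. Consider the augmented inverse operator $\hat{\mathbf{A}}^{-1} - \beta \hat{\mathbf{K}}$ with augmentation matrix $\hat{\mathbf{K}} = \hat{\mathbf{A}}^{-1}$, and the optimal augmentation factor $$\beta^* = \arg\min_{\beta\in\mathbb{R}} \mathbb{E}\big[\|\hat{\mathbf{A}}^{-1} - \beta\hat{\mathbf{K}} - \mathbf{A}^{-1}\|_{\mathbf{B},\mathbf{R}}^2\big] = \frac{\mathbb{E}\langle \hat{\mathbf{K}}, \hat{\mathbf{A}}^{-1} - \mathbf{A}^{-1}\rangle_{\mathbf{B},\mathbf{R}}}{\mathbb{E}\|\hat{\mathbf{K}}\|_{\mathbf{B},\mathbf{R}}^2}.$$ Then $\beta^* \geq 0$; equivalently, $\mathbb{E}\,\mathrm{tr}\big[\hat{\mathbf{A}}^{-T}\mathbf{A}^T\mathbf{A}(\hat{\mathbf{A}}^{-1}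 - \mathbf{A}^{-1})\big] \geq 0$.
   Context: For symmetric positive definite $\mathbf{B}$ and symmetric positive semidefinite $\mathbf{R}$, the inner product and semi-norm on $n\times n$ matrices are $\langle \mathbf{M}, \mathbf{N}\rangle_{\mathbf{B},\mathbf{R}} = \mathrm{tr}(\mathbf{R}^{1/2}\mathbf{M}^T\mathbf{B}\mathbf{N}\mathbf{R}^{1/2})$ and $\|\mathbf{M}\|_{\mathbf{B},\mathbf{R}}^2 = \langle \mathbf{M},\mathbf{M}\rangle_{\mathbf{B},\mathbf{R}}$. With $\mathbf{R} = \mathbb{E}[\mathbf{b}\mathbf{b}^T]$ and $\mathbf{b}$ independent of $\hat{\mathbf{A}}$, $\mathbb{E}\|\mathbf{M}\|^2_{\mathbf{B},\mathbf{R}}$ equals the expected squared error $\mathbb{E}\|\mathbf{M}\mathbf{b}\|_{\mathbf{B}}^2$ where $\|\mathbf{v}\|_{\mathbf{B}}^2 = \mathbf{v}^T\mathbf{B}\mathbf{v}$. Expectations are over the distribution of $\hat{\mathbf{A}}$. *)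

(* Defs.v *)
From HB Require Import structures.
From mathcomp Require Import all_boot all_order all_algebra.
From mathcomp Require Import all_classical all_reals all_analysis.
Set Implicit Arguments. Unset Strict Implicit. Unset Printing Implicit Defensive.
Import Order.TTheory GRing.Theory Num.Theory.
Local Open Scope classical_set_scope.
Local Open Scope ring_scope.

(* <M, N>_{B,R} = tr(R^{1/2} M^T B N R^{1/2}); Rh stands for R^{1/2}. *)
Definition mx_ip (K : comNzRingType) (n : nat) (B Rh M N : 'M[K]_n) : K :=
  \tr (Rh *m M^T *m B *m N *m Rh).

Definition mx_sqnorm (K : comNzRingType) (n : nat) (B Rh M : 'M[K]_n) : K :=
  mx_ip B Rh M M.

(* Borel sigma-algebra on n x n real matrices (= product sigma-algebra,
   generated by the entry maps). *)
Definition mx_cyl_sets (R : realType) (n : nat) : set (set 'M[R]_n) :=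
  [set S | exists (i j : 'I_n) (D : set R), measurable D /\
                                     S = [set M : 'M[R]_n | D (M i j)]].

Definition mx_borel (R : realType) (n : nat) : set (set 'M[R]_n) :=
  smallest (sigma_algebra setT) (@mx_cyl_sets R n).

Definition same_distribution (R : realType) (d : measure_display)
  (T : measurableType d) (P : probability T R) (n : nat)
  (X Y : T -> 'M[R]_n) : Prop :=
  forall S, mx_borel S -> P (X @^-1` S) = P (Y @^-1` S).

(* Main.v *)
Require Import Defs.
From HB Require Import structures.
From mathcomp Require Import all_boot all_order all_algebra.
From mathcomp Require Import all_classical all_reals all_analysis.
From mathcomp Require Import measurable_realfun lra.
Import Order.TTheory GRing.Theory Num.Theory.
Local Open Scope classical_set_scope.
Local Open Scope ring_scope.

Section gen.
Context d (T : measurableType d) (R : realType).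

Lemma measurable_inv_R : measurable_fun [set: R] (@GRing.inv R).
Proof.
have -> : [set: R] = [set 0] `|` ~` [set 0] by rewrite setUCr.
apply/measurable_funU => //; first exact: measurableC.
split; first exact: measurable_fun_set1.
apply: open_continuous_measurable_fun.
  by apply: closed_openC; apply: accessible_closed_set1; apply: hausdorff_accessible; exact: norm_hausdorff.
by move=> x; rewrite inE /= => /eqP x0; exact: inv_continuous.
Qed.

Definition mxm {m} (F : T -> 'M[R]_m) := forall i j, measurable_fun setT (fun w => F w i j).

Lemma mfeq (f g : T -> R) : (forall w, f w = g w) -> measurable_fun setT g -> measurable_fun setT f.
Proof. by move=> e; rewrite (funext e). Qed.

Lemma mdet m (F : T -> 'M[R]_m) : mxm F -> measurable_fun setT (fun w => \det (F w)).
Proof.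
move=> mF; rewrite /determinant.
apply: measurable_sum => s; apply: measurable_funM; first exact: measurable_cst.
by apply: measurable_prod => i _; exact: mF.
Qed.

Lemma minvmx m (F : T -> 'M[R]_m) : mxm F -> mxm (fun w => invmx (F w)).
Proof.
move=> mF i j; rewrite /invmx.
have -> : (fun w => (if F w \in unitmx then (\det (F w))^-1 *: \adj (F w) else F w) i j)
  = (fun w => if \det (F w) == 0 then F w i j else (\det (F w))^-1 * cofactor (F w) j i).
  apply/funext => w; rewrite unitmxE unitfE; case: eqP => //= _.
  by rewrite !mxE.
apply: measurable_fun_ifT.
- apply: measurable_fun_eqr; [exact: mdet | exact: measurable_cst].
- exact: mF.
apply: measurable_funM.
  by apply: measurableT_comp; [exact: measurable_inv_R | exact: mdet].
rewrite /cofactor; apply: measurable_funM; first exact: measurable_cst.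
by apply: mdet => k l; rewrite /=; under eq_fun do rewrite !mxE; exact: mF.
Qed.

Lemma mmul m p q (F : T -> 'M[R]_(m,p)) (G : T -> 'M[R]_(p,q)) :
  (forall i j, measurable_fun setT (fun w => F w i j)) ->
  (forall i j, measurable_fun setT (fun w => G w i j)) ->
  (forall i j, measurable_fun setT (fun w => (F w *m G w) i j)).
Proof.
move=> mF mG i j; apply: (@mfeq _ (fun w => \sum_k F w i k * G w k j)).
  by move=> w; rewrite mxE.
by apply: measurable_sum => k; apply: measurable_funM.
Qed.

Lemma mtr m p (F : T -> 'M[R]_(m,p)) :
  (forall i j, measurable_fun setT (fun w => F w i j)) ->
  (forall i j, measurable_fun setT (fun w => (F w)^T i j)).
Proof. by move=> mF i j; apply: (@mfeq _ (fun w => F w j i)) => // w; rewrite mxE. Qed.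

Lemma madd m p (F G : T -> 'M[R]_(m,p)) :
  (forall i j, measurable_fun setT (fun w => F w i j)) ->
  (forall i j, measurable_fun setT (fun w => G w i j)) ->
  (forall i j, measurable_fun setT (fun w => (F w + G w) i j)).
Proof.
move=> mF mG i j; apply: (@mfeq _ (fun w => F w i j + G w i j)).
  by move=> w; rewrite mxE.
exact: measurable_funD.
Qed.

Lemma mopp m p (F : T -> 'M[R]_(m,p)) :
  (forall i j, measurable_fun setT (fun w => F w i j)) ->
  (forall i j, measurable_fun setT (fun w => (- F w) i j)).
Proof.
move=> mF i j; apply: (@mfeq _ (fun w => - F w i j)).
  by move=> w; rewrite mxE.
by apply: measurableT_comp.
Qed.

Lemma mcst m p (C : 'M[R]_(m,p)) :
  (forall i j, measurable_fun setT (fun w : T => C i j)).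
Proof. by move=> i j; exact: measurable_cst. Qed.

Lemma mtrace m (F : T -> 'M[R]_m) : mxm F -> measurable_fun setT (fun w => \tr (F w)).
Proof. by move=> mF; apply: measurable_sum => i; exact: mF. Qed.

End gen.

Section mx.
Context (R : realType) (n : nat).
Definition mxR := 'M[R]_n.
HB.instance Definition _ := Choice.on mxR.
HB.instance Definition _ := isPointed.Build mxR 0.
Definition MxT : measurableType _ := g_sigma_algebraType (@mx_cyl_sets R n : set (set mxR)).

Lemma MxT_measurableE : (@measurable _ MxT) = @mx_borel R n.
Proof. by []. Qed.

Lemma mentry (i j : 'I_n) : measurable_fun [set: MxT] (fun M : MxT => (M : 'M[R]_n) i j).
Proof.
move=> _ D mD; rewrite setTI; apply: sub_sigma_algebra.
by exists i, j, D.
Qed.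

Lemma mto_MxT d (T : measurableType d) (F : T -> 'M[R]_n) :
  @mxm _ T R n F -> measurable_fun [set: T] (F : T -> MxT).
Proof.
move=> mF; apply: (@measurability _ _ T MxT setT F (@mx_cyl_sets R n : set (set mxR))); first by [].
move=> _ [S [i [j [D [mD ->]]]] <-].
rewrite setTI; have := mF i j measurableT D mD; rewrite setTI.
by [].
Qed.
End mx.

Section alg.
Context (R : realFieldType) (n : nat).
Implicit Types (A M N X U V : 'M[R]_n).

Lemma tr_sq_ge0 N : 0 <= \tr (N^T *m N).
Proof.
rewrite /mxtrace; apply: sumr_ge0 => i _; rewrite mxE; apply: sumr_ge0 => k _.
by rewrite mxE -expr2; exact: sqr_ge0.
Qed.

Definition hterm A M := \tr ((invmx (A + M))^T *m A^T *m A *m (invmx (A + M) - invmx A)).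

Lemma term_eq A X : A \in unitmx ->
  \tr ((invmx X)^T *m A^T *m A *m (invmx X - invmx A)) =
  \tr ((A *m invmx X)^T *m (A *m invmx X)) - \tr (A *m invmx X).
Proof.
move=> hA.
rewrite -trmx_mul -mulmxA mulmxBr mulmxV // mulmxBr mulmx1 raddfB /=.
by rewrite mxtrace_tr.
Qed.

Lemma pair_ge0 A M : A \in unitmx -> (A + M) \in unitmx -> (A + - M) \in unitmx ->
  0 <= hterm A M + hterm A (- M).
Proof.
move=> hA hX hY; rewrite /hterm !term_eq //.
set X := A + M in hX *; set Y := A + - M in hY *.
set U := A *m invmx X; set V := A *m invmx Y.
have eUV : U + V = U *m V + U *m V.
  have e1 : U *m (X *m invmx A) *m V = V.
    by rewrite /U /V !mulmxA -(mulmxA A) (mulVmx hX) mulmx1 (mulmxV hA) mul1mx.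
  have e2 : U *m (Y *m invmx A) *m V = U.
    by rewrite /U /V !mulmxA -(mulmxA _ (invmx A) A) (mulVmx hA) mulmx1 -(mulmxA _ Y) (mulmxV hY) mulmx1.
  have e3 : X *m invmx A + Y *m invmx A = 1%:M + 1%:M.
    by rewrite -mulmxDl /X /Y addrACA subrr addr0 mulmxDl mulmxV.
  rewrite -{1}e1 -{1}e2 addrC -[LHS]mulmxDl -mulmxDr e3 mulmxDr mulmxDl mulmx1.
  by [].
have etr : \tr U + \tr V = \tr (U *m V) + \tr (U *m V) by rewrite -[LHS]raddfD /= eUV raddfD.
have hsq := tr_sq_ge0 (U - V^T).
have e4 : \tr ((U - V^T)^T *m (U - V^T)) =
   \tr (U^T *m U) + \tr (V^T *m V) - \tr (U *m V) - \tr (U *m V).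
  have tB : (U - V^T)^T = U^T - V by rewrite linearB /= trmxK.
  rewrite tB mulmxBl !mulmxBr !raddfB /=.
  rewrite -trmx_mul mxtrace_tr (mxtrace_mulC V U) (mxtrace_mulC V V^T).
  lra.
lra.
Qed.
End alg.

Lemma nonint_Rintegral d (T : measurableType d) (R : realType) (P : measure T R)
  (f : T -> R) : measurable_fun setT f -> ~~ P.-integrable setT (EFin \o f) ->
  Rintegral P setT f = 0.
Proof.
move=> mf nI.
have mEf : measurable_fun setT (EFin \o f) by exact/measurable_EFinP.
have habs : (\int[P]_(x in setT) `|(EFin \o f) x| = +oo)%E.
  apply/eqP; rewrite eq_le leey /= leNgt; apply/negP => lt.
  by move/negP: nI; apply; apply/integrableP; split.
rewrite /Rintegral integralE.
have : (\int[P]_(x in setT) ((EFin \o f)^\+ x + (EFin \o f)^\- x) = +oo)%E.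
  rewrite -habs; apply: eq_integral => x _.
  by have := congr1 (fun g => g x) (fune_abse (EFin \o f)).
rewrite ge0_integralD //; last 2 first.
- exact: measurable_funepos.
- exact: measurable_funeneg.
have p0 : (0 <= \int[P]_(x in setT) (EFin \o f)^\+ x)%E by apply: integral_ge0 => x _.
have n0 : (0 <= \int[P]_(x in setT) (EFin \o f)^\- x)%E by apply: integral_ge0 => x _.
move: p0 n0.
case: (\int[P]_(x in setT) (EFin \o f)^\+ x)%E => [a||];
case: (\int[P]_(x in setT) (EFin \o f)^\- x)%E => [b||] //=.
Qed.

Theorem theorem4p1 (R : realType) (d : measure_display) (T : measurableType d)
  (P : probability T R) (n : nat) (A : 'M[R]_n) (Ahat : T -> 'M[R]_n)
  (hA : A \in unitmx)
  (hmeas : forall i j, measurable_fun setT (fun w => Ahat w i j))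
  (hinv : P [set w | Ahat w \notin unitmx] = 0%E)
  (hint : forall i j, P.-integrable setT (fun w => (Ahat w i j)%:E))
  (hmean : forall i j, (\int[P]_w (Ahat w i j)%:E)%E = (A i j)%:E)
  (hsq : forall i j k l, P.-integrable setT
           (fun w => (invmx (Ahat w) i j * invmx (Ahat w) k l)%:E))
  (hsym : same_distribution P (fun w => Ahat w - A) (fun w => - (Ahat w - A))) :
  let B := A^T *m A in
  let Rh := (1%:M : 'M[R]_n) in
  let Khat := fun w => invmx (Ahat w) in
  let beta_star :=
    Rintegral P setT (fun w => mx_ip B Rh (Khat w) (invmx (Ahat w) - invmx A))
    / Rintegral P setT (fun w => mx_sqnorm B Rh (Khat w)) in
  0 <= beta_star /\
  0 <= Rintegral P setT
         (fun w => \tr ((invmx (Ahat w))^T *m A^T *m A *m (invmx (Ahat w) - invmx A))).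
Proof.
move=> B Rh Khat beta_star.
set G := fun w => \tr ((invmx (Ahat w))^T *m A^T *m A *m (invmx (Ahat w) - invmx A)).
have key : 0 <= Rintegral P setT G.
  pose h := fun M : MxT R n => @hterm R n A (M : 'M[R]_n).
  have mentry' : @mxm _ (MxT R n) R n (fun M : MxT R n => (M : 'M[R]_n)).
    exact: mentry.
  have mAM : @mxm _ (MxT R n) R n (fun M : MxT R n => invmx (A + (M : 'M[R]_n))).
    by apply: minvmx; apply: madd; [exact: mcst | exact: mentry'].
  have mh : measurable_fun setT h.
    apply: mtrace; apply: mmul.
      apply: mmul; first apply: mmul.
      - by apply: mtr.
      - by apply: mtr; exact: mcst.
      - exact: mcst.
    by apply: madd => //; apply: mopp; exact: mcst.
  pose Z := fun w => (Ahat w - A : MxT R n).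
  pose Zn := fun w => (- (Ahat w - A) : MxT R n).
  have mZe : @mxm _ T R n (fun w => Ahat w - A).
    by apply: madd => //; apply: mopp; exact: mcst.
  have mZ : measurable_fun setT Z by exact: mto_MxT.
  have mZn : measurable_fun setT Zn by apply: mto_MxT; apply: mopp.
  have hG : G = h \o Z.
    by apply/funext => w; rewrite /h /hterm /Z /= [A + _]addrC subrK.
  have mG : measurable_fun setT G by rewrite hG; exact: measurableT_comp.
  have [hI|hNI] := boolP (P.-integrable setT (EFin \o G)); last first.
    by rewrite nonint_Rintegral.
  pose mu1 := pushforward P Z.
  pose mu2 := pushforward P Zn.
  have he : forall S, measurable S -> mu1 S = mu2 S.
    by move=> S mS; exact: hsym.
  have mEh : measurable_fun setT (EFin \o h) by exact/measurable_EFinP.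
  have hI' : P.-integrable (Z @^-1` setT) ((EFin \o h) \o Z).
    by rewrite preimage_setT; move: hI; rewrite hG; exact.
  have hI1 : mu1.-integrable setT (EFin \o h).
    exact: integrable_pushforward.
  have hI2 : mu2.-integrable setT (EFin \o h).
    apply/integrableP; split => //.
    rewrite -(eq_measure_integral mu2 (m1 := mu1)); last by move=> S mS _; exact: he.
    by case/integrableP: hI1.
  have hIn : P.-integrable setT (EFin \o (h \o Zn)).
    apply/integrableP; split; first by apply/measurable_EFinP; exact: measurableT_comp.
    have := @ge0_integral_pushforward _ _ _ _ R Zn mZn P setT (fun M => `|(h M)%:E|)%E
      measurableT.
    rewrite preimage_setT => <- //.
    - by case/integrableP: hI2.
    - by apply: measurableT_comp => //; exact: measurableT_comp.
  have eint : (\int[P]_(w in setT) (EFin \o G) w = \int[P]_(w in setT) (EFin \o (h \o Zn)) w)%E.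
    rewrite hG.
    transitivity (\int[mu1]_(M in setT) (EFin \o h) M)%E.
      by rewrite integral_pushforward // preimage_setT.
    rewrite (eq_measure_integral mu2); last by move=> S mS _; exact: he.
    by rewrite integral_pushforward // preimage_setT.
  pose Sbad := [set M : MxT R n | \det (A + (M : 'M[R]_n)) = 0].
  have mSbad : measurable Sbad.
    have mAp : @mxm _ (MxT R n) R n (fun M : MxT R n => A + (M : 'M[R]_n)).
      by apply: madd; [exact: mcst | exact: mentry'].
    have := @mdet _ (MxT R n) R n (fun M : MxT R n => A + (M : 'M[R]_n))
      mAp measurableT [set 0] (measurable_set1 0).
    by rewrite setTI.
  pose N1 := Z @^-1` Sbad.
  pose N2 := Zn @^-1` Sbad.
  have mN1 : measurable N1 by have := mZ measurableT Sbad mSbad; rewrite setTI.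
  have mN2 : measurable N2 by have := mZn measurableT Sbad mSbad; rewrite setTI.
  have eN1 : N1 = [set w | Ahat w \notin unitmx].
    apply/funext => w; rewrite /N1 /Sbad /Z /preimage /= [A + _]addrC subrK.
    by rewrite unitmxE unitfE negbK; apply/propext; split => [->|/eqP].
  have PN1 : P N1 = 0%E by rewrite eN1.
  have PN2 : P N2 = 0%E by rewrite -PN1; exact: (esym (he _ mSbad)).
  have Sge : forall w, ~ N1 w -> ~ N2 w -> 0 <= G w + h (Zn w).
    move=> w n1 n2.
    have u1 : A + (Z w : 'M[R]_n) \in unitmx.
      by rewrite unitmxE unitfE; apply/eqP; exact: n1.
    have u2 : A + - (Z w : 'M[R]_n) \in unitmx.
      by rewrite unitmxE unitfE; apply/eqP; exact: n2.
    have := @pair_ge0 R n A (Z w : 'M[R]_n) hA u1 u2.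
    by rewrite hG.
  have mS : measurable_fun setT (fun w => G w + h (Zn w)).
    exact: (measurable_funD mG (measurableT_comp mh mZn)).
  pose S := fun w => G w + h (Zn w).
  have eSw : forall w, S w = G w + h (Zn w) by [].
  clearbody S.
  have {}mS : measurable_fun setT S by rewrite (funext eSw).
  have {}Sge : forall w, ~ N1 w -> ~ N2 w -> 0 <= S w by move=> w; rewrite eSw; exact: Sge.
  pose f' := fun w => Num.max (S w) 0.
  have mf' : measurable_fun setT f' by exact: measurable_maxr.
  have f'ge : forall w, 0 <= f' w by move=> w; rewrite /f' le_max lexx orbT.
  have f'eq : forall w, 0 <= S w -> f' w = S w by move=> w hw; rewrite /f' max_l.
  clearbody f'.
  have hae : ae_eq P setT (EFin \o f') (EFin \o S).
    exists (N1 `|` N2); split.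
    - exact: measurableU.
    - apply/eqP; rewrite eq_le measure_ge0 andbT.
      apply: le_trans (measureU2 _ mN1 mN2) _.
      have e0 : forall x y : \bar R, x = 0%E -> y = 0%E -> (x + y <= 0)%E by move=> x y -> ->; rewrite adde0.
      exact: e0.
    - move=> w /= Hw; apply: contra_notP Hw => /not_orP[n1 n2] _.
      by congr EFin; apply: f'eq; exact: Sge.
  have I0 : (0 <= \int[P]_(w in setT) (EFin \o S) w)%E.
    have mEf' : measurable_fun setT (EFin \o f') by exact/measurable_EFinP.
    have mES : measurable_fun setT (EFin \o S) by exact/measurable_EFinP.
    rewrite -(ae_eq_integral _ _ measurableT mEf' mES hae).
    by apply: integral_ge0 => w _; rewrite lee_fin.
  have eS : (\int[P]_(w in setT) (EFin \o S) w =
     \int[P]_(w in setT) (EFin \o G) w + \int[P]_(w in setT) (EFin \o (h \o Zn)) w)%E.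
    by rewrite -(integralD measurableT hI hIn); apply: eq_integral => w _; rewrite -EFinD -eSw.
  have fin := integrable_fin_num measurableT hI.
  move: I0; rewrite eS -eint /Rintegral -(fineK fin) -EFinD lee_fin /=.
  move: (fine _) => r; lra.
split=> //.
rewrite /beta_star; apply: divr_ge0.
  have -> : (fun w => mx_ip B Rh (Khat w) (invmx (Ahat w) - invmx A)) = G.
    by apply/funext => w; rewrite /mx_ip /Rh /B /G /Khat mul1mx mulmx1 !mulmxA.
  exact: key.
apply: Rintegral_ge0 => w _; rewrite /mx_sqnorm /mx_ip /Rh /B mul1mx mulmx1.
have -> : (Khat w)^T *m (A^T *m A) *m Khat w = (A *m Khat w)^T *m (A *m Khat w).
  by rewrite trmx_mul !mulmxA.
exact: tr_sq_ge0.
Qed.
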